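(* Let $\mathcal U$ be a fine Ramsey ultrafilter on $\mathbb N^{<\omega}$. Then the condition $$X\approx Y\iff\{F\in\mathbb N^{<\omega}:S_X(\mathbf x_F)=S_Y(\mathbf x_F)\}\in\mathcal U\qquad(X,Y\in\mathbb W)$$ defines a natural equinumerosity $\approx$ on $\mathbb W$. The corresponding set of numerosities $\mathbb N^{\mathbb N^{<\omega}}/\mathcal U$ is isomorphic to the ultrapower $\mathbb N^{\mathbb N}/\sigma\mathcal U$, where $\sigma:\mathbb N^{<\omega}\to\mathbb N$ is $\sigma(F)=|F|$ and $\sigma\mathcal U=\{A\subseteq\mathbb N:\sigma^{-1}[A]\in\mathcal U\}$. This equinumerosity is characterized by $\mathcal U$-congruences, i.e. for $X,Y\in\mathbb W$, $X\approx Y$ iff there exists a $\mathcal U$-congruence between $X$ and $Y$. Finally, it becomes asymptotic after a suitable reordering of $\mathbb N$: there is a permutation $\pi$ of $\mathbb N$ such that, writing $G_m=\pi[\{0,\dots,m\}]$, for every $S$ in the gauge ideal $\mathfrak I=\{S\in\mathcal R:\ \{F: S(\mathbf x_F)=0\}\in\mathcal U\}$ and every $k$ there is $m$ with $\{0,\dots,k\}\subseteq G_m$ and $S(\mathbf x_{G_m})=0$.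
   Context: Let $\mathbb N=\{0,1,2,\dots\}$, $\mathbb N^{<\omega}$ the set of finite subsets of $\mathbb N$. $\mathbb{W}$ is the family of finitary point sets: sets $A\subseteq\bigcup_{k\ge1}\mathbb N^k$ of finite tuples of natural numbers such that for every $n$ there is $h$ with $A\cap\{0,\dots,n\}^k=\emptyset$ for all $k>h$. Cartesian products are identified with concatenations; $\{n\}$ is the set whose only element is the 1-tuple $(n)$; $A,B\in\mathbb W$ are multipliable if distinct pairs $(a,b)\in A\times B$ have distinct concatenations. Given an equivalence relation $\approx$ on $\mathbb W$, $A\succ B$ (equivalently $B\prec A$) means there exist $A',B'\in\mathbb W$ with $B'\subsetneq A'$, $A\approx A'$, $B\approx B'$. An equinumerosity is an equivalence relation on $\mathbb W$ such that for all $A,B\in\mathbb W$: (AP) $A\approx B$ iff $A\setminus B\approx B\setminus A$; (ZP) exactly one of $A\approx B$, $A\succ B$, $A\prec B$ holds; (TP) if $T$ is injective on $A$ and $T(a)$ is a permutation of the coordinates of $a$ for every $a\in A$, then $A\approx T[A]$; (UP) $A\times\{n\}\approx A$ for all $n$; (PP) if $A,B$ are multipliable, $A',B'$ are multipliable, $A\approx A'$, $B\approx B'$, then $A\times B\approx A'\times B'$. It is natural if whenever $T$ is injective on $X\in\mathbb W$ and the set of components of $T(x)$ equals that of $x$ for all $x\in X$, then $X\approx T[X]$. Series: indeterminates $t_0,t_1,\dots$; $\mathbf A$ the eventually zero sequences $\mathbf a$ of non-negative integers; $t^{\mathbf a}=\prod_it_i^{a_i}$; $\mathcal R$ is the ring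 of formal series $S=\sum n_{\mathbf a}t^{\mathbf a}$ ($n_{\mathbf a}\in\mathbb Z$) for which there are $d_n\in\mathbb N$ with $n_{\mathbf a}=0$ whenever $a_n>d_n$ for some $n$, and $b\in\mathbb N$ with $|n_{\mathbf a}|\le b(\sum_ia_i)!/\prod_ia_i!$. For a tuple $x=(x_1,\dots,x_d)$, $t_x=t^{\mathbf a}$ with $a_i=|\{j:x_j=i\}|$; $S_X=\sum_{x\in X}t_x$, $S_\emptyset=0$. $S(\mathbf x)$ is the value of $S$ when $x_n$ is assigned to $t_n$. For $F\in\mathbb N^{<\omega}$, $\mathbf x_F$ is the $0$-$1$ sequence with $\mathbf x_F(n)=1$ iff $n\in F$; note $S_X(\mathbf x_F)=|X_F|$ where $X_F=X\cap\bigcup_{n}F^n$. An ultrafilter $\mathcal U$ on $\mathbb N^{<\omega}$ is fine if it contains every $\{F:n\in F\}$, $n\in\mathbb N$; it is Ramsey if for every partition of the set of 2-element subsets of $\mathbb N^{<\omega}$ into two classes there is a set in $\mathcal U$ all of whose 2-element subsets lie in the same class. For $X,Y\in\mathbb W$, a $\mathcal U$-congruence between $X$ and $Y$ is an injective map $\tau:X\to Y$ such that $\{F\in\mathbb N^{<\omega}:\tau[X_F]=Y_F\}\in\mathcal U$. *)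

(* Defs.v *)
From mathcomp Require Import all_boot all_order all_algebra.
From mathcomp Require Import finmap.
Set Implicit Arguments. Unset Strict Implicit. Unset Printing Implicit Defensive.
Import GRing.Theory Num.Theory.
Local Open Scope fset_scope.

Definition pset := seq nat -> Prop.

(** The fsfamily W of finitary point sets: sets of (nonempty) tuples such that
    for every n there is h with A ∩ {0..n}^k = ∅ for all k > h. *)
Definition finitary (A : pset) : Prop :=
  (forall x, A x -> x <> [::]) /\
  forall n, exists h, forall x, A x -> (h < size x)%N -> exists2 i, i \in x & (n < i)%N.

Definition setD (A B : pset) : pset := fun x => A x /\ ~ B x.
Definition psubset (B A : pset) : Prop :=
  (forall x, B x -> A x) /\ exists x, A x /\ ~ B x.
Definition image (T : seq nat -> seq nat) (A : pset) : pset :=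
  fun y => exists2 x, A x & T x = y.
Definition injective_on (T : seq nat -> seq nat) (A : pset) : Prop :=
  forall x y, A x -> A y -> T x = T y -> x = y.
(** Cartesian product identified with concatenation. *)
Definition prodp (A B : pset) : pset :=
  fun z => exists a b, [/\ A a, B b & z = a ++ b].
Definition single (n : nat) : pset := fun x => x = [:: n].
Definition multipliable (A B : pset) : Prop :=
  forall a b a' b', A a -> B b -> A a' -> B b' -> a ++ b = a' ++ b' -> a = a' /\ b = b'.

Section Equinumerosity.
Variable E : pset -> pset -> Prop.

Definition succ_rel (A B : pset) : Prop :=
  exists A' B', [/\ finitary A', finitary B', psubset B' A', E A A' & E B B'].

Definition equiv_on_W : Prop :=
  (forall A, finitary A -> E A A) /\
  (forall A B, finitary A -> finitary B -> E A B -> E B A) /\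
  (forall A B C, finitary A -> finitary B -> finitary C -> E A B -> E B C -> E A C).

Definition AP : Prop := forall A B, finitary A -> finitary B ->
  (E A B <-> E (setD A B) (setD B A)).
Definition ZP : Prop := forall A B, finitary A -> finitary B ->
  [\/ E A B /\ ~ succ_rel A B /\ ~ succ_rel B A,
      ~ E A B /\ succ_rel A B /\ ~ succ_rel B A
    | ~ E A B /\ ~ succ_rel A B /\ succ_rel B A].
Definition TP : Prop := forall A (T : seq nat -> seq nat), finitary A ->
  injective_on T A -> (forall a, A a -> perm_eq (T a) a) -> E A (image T A).
Definition UP : Prop := forall A n, finitary A -> E (prodp A (single n)) A.
Definition PP : Prop := forall A B A' B', finitary A -> finitary B ->
  finitary A' -> finitary B' -> multipliable A B -> multipliable A' B' ->
  E A A' -> E B B' -> E (prodp A B) (prodp A' B').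

Definition equinumerosity : Prop := [/\ equiv_on_W, AP, ZP, TP & UP /\ PP].

Definition natural : Prop := forall X (T : seq nat -> seq nat), finitary X ->
  injective_on T X -> (forall x, X x -> T x =i x) -> E X (image T X).
End Equinumerosity.

Definition fsets := {fset nat}.
Definition fsfamily := (fsets -> Prop) -> Prop.

Definition is_ultrafilter (U : fsfamily) : Prop :=
  [/\ U (fun _ => True), ~ U (fun _ => False),
      (forall A B, U A -> U B -> U (fun F => A F /\ B F)),
      (forall A B : fsets -> Prop, U A -> (forall F, A F -> B F) -> U B)
    & (forall A, U A \/ U (fun F => ~ A F))].

Definition is_fine (U : fsfamily) : Prop := forall n : nat, U (fun F => n \in F).

(** Ramsey: every 2-colouring of the 2-element subsets {F,G} (a symmetric
    colouring c) has a homogeneous set in U. *)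
Definition is_ramsey (U : fsfamily) : Prop :=
  forall c : fsets -> fsets -> bool, (forall F G, c F G = c G F) ->
  exists2 A, U A & exists b, forall F G, A F -> A G -> F != G -> c F G = b.

Definition has_card (A : pset) (n : nat) : Prop :=
  exists s : seq (seq nat), [/\ uniq s, size s = n & forall x, A x <-> x \in s].

Definition restr (X : pset) (F : fsets) : pset := fun x => X x /\ all (fun i => i \in F) x.

(** X ≈ Y iff {F : S_X(x_F) = S_Y(x_F)} ∈ U, using S_X(x_F) = |X_F|. *)
Definition approxU (U : fsfamily) (X Y : pset) : Prop :=
  U (fun F => exists n, has_card (restr X F) n /\ has_card (restr Y F) n).

Definition Ucongruence (U : fsfamily) (tau : seq nat -> seq nat) (X Y : pset) : Prop :=
  [/\ forall x, X x -> Y (tau x), injective_on tau X &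
      U (fun F => forall y, restr Y F y <-> exists2 x, restr X F x & tau x = y)].

Definition sigmaU (U : fsfamily) (A : nat -> Prop) : Prop := U (fun F => A #|` F|).

(** Formal series: monomials t^a (a eventually zero) are represented by the
    sorted list containing i with multiplicity a_i; a series is its
    coefficient function. *)
Definition series := seq nat -> int.

Definition multinom (s : seq nat) : nat :=
  (size s)`! %/ \prod_(n <- undup s) (count_mem n s)`!.

Definition inR (S : series) : Prop :=
  [/\ (forall s, S s != 0%R -> sorted leq s),
      (exists d : nat -> nat, forall s n, (d n < count_mem n s)%N -> S s = 0%R)
    & (exists b : nat, forall s, sorted leq s -> (absz (S s) <= b * multinom s)%N)].

(** [evalF S P v]: S(x_F) = v, where F is given by the predicate P
    (x_F(n) = 1 iff P n); S(x_F) is the (finite) sum of the coefficients of the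
    monomials whose variables all lie in F. *)
Definition evalF (S : series) (P : pred nat) (v : int) : Prop :=
  exists L : seq (seq nat),
    [/\ uniq L, (forall s, s \in L -> all P s),
        (forall s, all P s -> S s != 0%R -> s \in L)
      & v = (\sum_(s <- L) S s)%R].

(* Main.v *)
Require Import Defs.
From mathcomp Require Import all_boot all_order all_algebra.
From mathcomp Require Import finmap.
From mathcomp Require Import zify.
From mathcomp Require Import boolp.
From Stdlib Require Classical_Prop.
Notation NNPP := Classical_Prop.NNPP.
Require Import Defs.
Set Implicit Arguments. Unset Strict Implicit. Unset Printing Implicit Defensive.
Local Open Scope fset_scope.

Section Ultra.
Variable U : fsfamily.
Hypothesis HU : is_ultrafilter U.

Lemma U_T : U (fun _ => True). Proof. by case: HU. Qed.
Lemma U_mono (A B : fsets -> Prop) : U A -> (forall F, A F -> B F) -> U B.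
Proof. by case: HU => _ _ _ H _; apply: H. Qed.
Lemma U_and (A B : fsets -> Prop) : U A -> U B -> U (fun F => A F /\ B F).
Proof. by case: HU => _ _ H _ _; apply: H. Qed.
Lemma U_em (A : fsets -> Prop) : U A \/ U (fun F => ~ A F).
Proof. by case: HU => _ _ _ _ H; apply: H. Qed.
Lemma U_ne (A : fsets -> Prop) : U A -> exists F, A F.
Proof.
move=> UA; apply: NNPP => H; case: HU => _ H0 _ _ _; apply: H0.
apply: (U_mono UA) => F AF; apply: H; by exists F.


Qed.
Lemma U_not (A : fsets -> Prop) : U A -> U (fun F => ~ A F) -> False.
Proof. by move=> H1 H2; case: (U_ne (U_and H1 H2)) => F []. Qed.
Lemma U_imp (A B : fsets -> Prop) : U A -> U (fun F => A F -> B F) -> U B.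
Proof. move=> H1 H2; apply: (U_mono (U_and H1 H2)) => F [a b]; exact: b a. Qed.

Hypothesis Hfine : is_fine U.

Lemma U_all (s : seq nat) : U (fun G => all (fun i => i \in G) s).
Proof.
elim: s => [|a s IH]; first by apply: (U_mono U_T).
by apply: (U_mono (U_and (Hfine a) IH)) => F [H1 H2] /=; rewrite H1 H2.
Qed.

Lemma U_sub (F : fsets) : U (fun G => F `<=` G).
Proof.
apply: (U_mono (U_all (enum_fset F))) => G /allP H; apply/fsubsetP => x xF.
by apply: H.
Qed.

Lemma U_neq (F : fsets) : U (fun G => G <> F).
Proof.
case: (U_em (fun G => G <> F)) => // H; exfalso.
pose n := (\sum_(i <- F) i).+1.
have nF : n \notin F.
  apply/negP => nF; have : (n <= \sum_(i <- F) i)%N.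
    by rewrite (big_rem n) //= leq_addr.
  by rewrite ltnn.
apply: (U_not (Hfine n)); apply: (U_mono H) => G /NNPP ->; exact/negP.
Qed.

Lemma U_big (m : nat) : U (fun G => (m <= #|` G|)%N).
Proof.
apply: (U_mono (U_sub [fset i in iota 0 m])) => G /fsubset_leq_card.
by rewrite card_fseq undup_id ?iota_uniq // size_iota.
Qed.

Definition chain (A : fsets -> Prop) :=
  forall F G, A F -> A G -> F `<=` G \/ G `<=` F.

Hypothesis Hramsey : is_ramsey U.

Lemma chain_ex : exists2 A, U A & chain A.
Proof.
pose c (F G : fsets) := (F `<=` G) || (G `<=` F).
have [|A UA [b Hb]] := Hramsey (c := c); first by move=> F G; rewrite /c orbC.
exists A => //; case: b Hb => Hb.
  by move=> F G AF AG; case: (F =P G) => [->|/eqP ne]; [left; exact: fsubset_refl|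
     have := Hb F G AF AG ne; rewrite /c => /orP[]; [left|right]].
exfalso; have [F AF] := U_ne UA.
have [G [[AG FG] GF]] := U_ne (U_and (U_and UA (U_sub F)) (U_neq F)).
have /eqP ne : G != F by apply/eqP.
have ne2 : F != G by apply/eqP => e; apply: ne; rewrite e.
by have := Hb F G AF AG ne2; rewrite /c FG.
Qed.

Lemma chain_eq (A : fsets -> Prop) F G : chain A -> A F -> A G ->
  #|` F| = #|` G| -> F = G.
Proof.
move=> cA AF AG e; case: (cA F G AF AG) => H.
  by apply/fsetP; apply/(fsubset_cardP e).
by apply/esym/fsetP; apply/(fsubset_cardP (esym e)).
Qed.

Lemma chain_le (A : fsets -> Prop) F G : chain A -> A F -> A G ->
  (#|` F| <= #|` G|)%N -> F `<=` G.
Proof.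
move=> cA AF AG le; case: (cA F G AF AG) => // H.
have := fsubset_leq_card H => le2.
have e : #|` G| = #|` F| by apply/eqP; rewrite eqn_leq le2 le.
by rewrite (chain_eq cA AG AF e) fsubset_refl.
Qed.

Section Enum.
Variable P : fsets -> Prop.
Hypothesis UP : U P.
Hypothesis cP : chain P.

Lemma pick_ex n : exists s, `[< exists F, [/\ P F, (n <= #|` F|)%N & #|` F| = s] >].
Proof.
have [F [PF le]] := U_ne (U_and UP (U_big n)).
by exists #|` F|; apply/asboolP; exists F.
Qed.

Definition pickGe n : fsets :=
  let s := ex_minn (pick_ex n) in
  match pselect (exists F, [/\ P F, (n <= #|` F|)%N & #|` F| = s]) with
  | left H => proj1_sig (cid H)
  | right _ => fset0
  end.

Lemma pickGeP n : [/\ P (pickGe n), (n <= #|` pickGe n|)%N &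
  forall F, P F -> (n <= #|` F|)%N -> (#|` pickGe n| <= #|` F|)%N].
Proof.
rewrite /pickGe; case: ex_minnP => s /asboolP Hs Hmin.
case: pselect => // H; case: (cid H) => G /= [PG nG GS]; split => //.
by move=> F PF nF; rewrite GS; apply: Hmin; apply/asboolP; exists F.
Qed.

Fixpoint Den (j : nat) : fsets :=
  if j is j'.+1 then pickGe (#|` Den j'|.+1) else pickGe 0.

Lemma Den_P j : P (Den j).
Proof. by case: j => [|j] /=; [case: (pickGeP 0)|case: (pickGeP (#|` Den j|.+1))]. Qed.

Lemma Den_lt j : (#|` Den j| < #|` Den j.+1|)%N.
Proof. by rewrite /=; case: (pickGeP (#|` Den j|.+1)). Qed.

Lemma Den_mono j k : (j <= k)%N -> (#|` Den j| <= #|` Den k|)%N.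
Proof.
move=> /subnK <-; elim: (k - j)%N => [|i IH] //.
by rewrite addSn (leq_trans IH) // ltnW // Den_lt.
Qed.

Lemma Den_ge j : (j <= #|` Den j|)%N.
Proof. by elim: j => // j IH; apply: leq_trans (Den_lt j). Qed.

Lemma Den_strict j k : (j < k)%N -> (#|` Den j| < #|` Den k|)%N.
Proof. by move=> jk; apply: leq_trans (Den_lt j) (Den_mono jk). Qed.

Lemma Den_sub j k : (j <= k)%N -> Den j `<=` Den k.
Proof. by move=> jk; apply: (chain_le cP (Den_P j) (Den_P k) (Den_mono jk)). Qed.

Lemma Den_inj : injective Den.
Proof.
move=> j k e; apply/eqP; rewrite eqn_leq; apply/andP; split; rewrite leqNgt;
  apply/negP => lt; have := Den_strict lt; by rewrite e ltnn.
Qed.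

Lemma Den_all F : P F -> exists j, F = Den j.
Proof.
move=> PF.
suff H : forall n, (#|` F| <= #|` Den n|)%N -> exists j, F = Den j.
  by apply: (H #|` F|); apply: Den_ge.
elim=> [|n IH] le.
  exists 0; apply: (chain_eq cP PF (Den_P 0)); apply/eqP; rewrite eqn_leq le.
  by case: (pickGeP 0) => _ _ /(_ F PF (leq0n _)).
case: (leqP #|` F| #|` Den n|) => [|lt]; first exact: IH.
exists n.+1; apply: (chain_eq cP PF (Den_P _)); apply/eqP; rewrite eqn_leq le.
by case: (pickGeP (#|` Den n|.+1)) => _ _ /(_ F PF lt).
Qed.

Lemma Den_cover (x : seq nat) : exists j, all (fun i => i \in Den j) x.
Proof.
have [G [PG /fsubsetP sub]] := U_ne (U_and UP (U_sub [fset i in x])).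
have [j eG] := Den_all PG; exists j; apply/allP => i ix; rewrite -eG; apply: sub.
by rewrite in_fset.
Qed.

End Enum.

End Ultra.

Fixpoint seqs_upto (h : nat) (l : seq nat) : seq (seq nat) :=
  if h is h'.+1 then [::] :: [seq a :: s | a <- l, s <- seqs_upto h' l]
  else [:: [::]].

Lemma seqs_uptoP h l x : (x \in seqs_upto h l) = (size x <= h)%N && all (fun i => i \in l) x.
Proof.
elim: h x => [|h IH] [|a x] //=.
rewrite in_cons /=; apply/allpairsP/idP.
  by case=> [[b s] /= [bl sS [-> ->]]]; move: sS; rewrite IH ltnS /= => /andP[-> ->]; rewrite bl.
rewrite ltnS; move=> /and3P[xh al xa]; exists (a, x) => /=; split => //.
by rewrite IH xh xa.
Qed.

Lemma finitary_fset (X : pset) F : finitary X ->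
  exists S : {fset seq nat}, forall x, restr X F x <-> x \in S.
Proof.
case=> _ /(_ (\max_(i <- F) i)) [h Hh].
exists [fset x in seqs_upto h (enum_fset F) | `[< X x >]] => x.
rewrite in_fset !inE /= seqs_uptoP; split.
  case=> Xx /allP aF; apply/andP; split; last exact/asboolP.
  apply/andP; split; last by apply/allP => i /aF.
  rewrite leqNgt; apply/negP => hx; case: (Hh x Xx hx) => i ix.
  by rewrite ltnNge (@leq_bigmax_seq _ (enum_fset F) xpredT (fun i => i) i (aF i ix)).
by case/andP => /andP[_ /allP H] /asboolP Xx; split => //; apply/allP => i /H.
Qed.

Definition XF (X : pset) (F : fsets) : {fset seq nat} :=
  match pselect (exists S : {fset seq nat}, forall x, restr X F x <-> x \in S) with
  | left H => proj1_sig (cid H)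
  | right _ => fset0
  end.

Lemma XFP X F : finitary X -> forall x, restr X F x <-> x \in XF X F.
Proof.
move=> fX; rewrite /XF; case: pselect => [H|]; last by move: (finitary_fset F fX).
by case: (cid H).
Qed.

Definition cnt X F := #|` XF X F|.

Lemma hc_fset (P : pset) (S : {fset seq nat}) :
  (forall x, P x <-> x \in S) -> has_card P #|` S|.
Proof. move=> H; exists (enum_fset S); split; [exact: fset_uniq | by [] | move=> x; rewrite H //]. Qed.

Lemma hc_unique P n m : has_card P n -> has_card P m -> n = m.
Proof.
case=> [s [us <- Hs]] [t [ut <- Ht]]; apply: perm_size; apply: uniq_perm => // x.
by apply/idP/idP => [/Hs/Ht|/Ht/Hs].
Qed.

Lemma hc_cnt X F : finitary X -> has_card (restr X F) (cnt X F).
Proof. by move=> fX; apply: hc_fset; apply: XFP. Qed.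

Lemma approx_cnt U X Y : is_ultrafilter U -> finitary X -> finitary Y ->
  approxU U X Y <-> U (fun F => cnt X F = cnt Y F).
Proof.
move=> HU fX fY; split => H.
  apply: (U_mono HU H) => F [n [H1 H2]].
  by rewrite (hc_unique (hc_cnt F fX) H1) (hc_unique (hc_cnt F fY) H2).
apply: (U_mono HU H) => F e; exists (cnt X F); split; first exact: hc_cnt.
by rewrite e; apply: hc_cnt.
Qed.

Lemma finitary_sub (A B : pset) : (forall x, B x -> A x) -> finitary A -> finitary B.
Proof.
move=> sub [H1 H2]; split; first by move=> x /sub; apply: H1.
by move=> n; have [h Hh] := H2 n; exists h => x /sub; apply: Hh.
Qed.

Lemma XF_mono X F G : finitary X -> F `<=` G -> XF X F `<=` XF X G.
Proof.
move=> fX /fsubsetP FG; apply/fsubsetP => x /(XFP _ fX) [Xx /allP aF].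
by apply/(XFP _ fX); split => //; apply/allP => i /aF /FG.
Qed.

Section Blocks.
Variable S : nat -> {fset seq nat}.
Hypothesis Snest : forall i j, (i <= j)%N -> S i `<=` S j.

Definition prevS j := if j is j'.+1 then S j' else fset0.
Definition blk j := S j `\` prevS j.

Lemma prevS_sub j : prevS j `<=` S j.
Proof. by case: j => [|j] /=; [exact: fsub0set | apply: Snest]. Qed.

Lemma blk_sub j : blk j `<=` S j.
Proof. exact: fsubsetDl. Qed.

Lemma card_blk j : #|` blk j| = (#|` S j| - #|` prevS j|)%N.
Proof. by rewrite /blk cardfsDS // prevS_sub. Qed.

Lemma prevS_ge i j : (i < j)%N -> S i `<=` prevS j.
Proof. by case: j => // j ij; apply: Snest. Qed.

Lemma blk_uniq x i j : x \in blk i -> x \in blk j -> i = j.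
Proof.
wlog ij : i j / (i <= j)%N.
  by move=> W xi xj; case: (leqP i j) => [/W|/ltnW/W]; [apply | move=> H; apply/esym/H].
move=> xi xj; apply/eqP; rewrite eqn_leq ij leqNgt; apply/negP => lt.
have := fsubsetP (prevS_ge lt) x (fsubsetP (blk_sub i) x xi).
by move: xj; rewrite /blk in_fsetD => /andP[/negPf ->].
Qed.

Definition stage x : nat :=
  match pselect (exists j, x \in S j) with
  | left H => ex_minn H
  | right _ => 0
  end.

Lemma stageP x j : x \in S j -> x \in blk (stage x) /\ (stage x <= j)%N.
Proof.
move=> xj; rewrite /stage; case: pselect => [H|[]]; last by exists j.
case: ex_minnP => s xs smin; split; last exact: smin.
rewrite /blk in_fsetD xs andbT; case: s xs smin => //= s xs smin.
by apply/negP => /smin; rewrite ltnn.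
Qed.

Lemma stage_blk x j : x \in blk j -> stage x = j.
Proof.
move=> xb; have [H _] := stageP (fsubsetP (blk_sub j) x xb).
exact: blk_uniq H xb.
Qed.

Lemma blk_mem_le x i j : x \in blk i -> x \in S j -> (i <= j)%N.
Proof. by move=> xb /stageP [_]; rewrite (stage_blk xb). Qed.

End Blocks.

Lemma hc_image (P Q : pset) n (f : seq nat -> seq nat) : has_card P n ->
  (forall x y, P x -> P y -> f x = f y -> x = y) ->
  (forall y, Q y <-> exists2 x, P x & f x = y) -> has_card Q n.
Proof.
case=> s [us <- Hs] finj HQ; exists (map f s); split; last 1 first.
- move=> y; rewrite HQ; split.
    by case=> x /Hs xs <-; apply: map_f.
  by case/mapP => x /Hs Px ->; exists x.
- rewrite map_inj_in_uniq // => x y /Hs Px /Hs Py; exact: finj.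
- exact: size_map.
Qed.

Lemma hc_prod (A B : pset) F n m : has_card (restr A F) n -> has_card (restr B F) m ->
  multipliable A B -> has_card (restr (prodp A B) F) (n * m).
Proof.
case=> s [us <- Hs] [t [ut <- Ht]] mAB.
exists [seq a ++ b | a <- s, b <- t]; split.
- apply: allpairs_uniq => // [[a b] [a' b']] /allpairsP [[x y] /= [xs yt [-> ->]]].
  move=> /allpairsP [[x' y'] /= [xs' yt' [-> ->]]] /= e.
  have /Hs [Ax _] := xs; have /Ht [By _] := yt.
  have /Hs [Ax' _] := xs'; have /Ht [By' _] := yt'.
  by case: (mAB _ _ _ _ Ax By Ax' By' e) => -> ->.
- exact: size_allpairs.
- move=> z; split.
    case=> [[a [b [Aa Bb ez]]]]; rewrite ez all_cat => /andP[aF bF].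
    by apply/allpairsP; exists (a, b) => /=; split => //; [apply/Hs|apply/Ht].
  case/allpairsP => [[a b] /= [/Hs [Aa aF] /Ht [Bb bF] ->]]; split.
    by exists a, b.
  by rewrite all_cat aF bF.
Qed.

Section Part1.
Variable U : fsfamily.
Hypothesis HU : is_ultrafilter U.
Hypothesis Hfine : is_fine U.

Lemma approx_image X (T : seq nat -> seq nat) : finitary X -> injective_on T X ->
  (forall x, X x -> T x =i x) -> approxU U X (image T X).
Proof.
move=> fX Tinj Tm; apply: (U_mono HU (U_T HU)) => F _; exists (cnt X F).
split; first exact: hc_cnt.
apply: (hc_image (hc_cnt F fX)) => [x y [Xx _] [Xy _]|y]; first exact: Tinj.
split.
  case=> [[x Xx <-]] aF; exists x => //; split => //.
  by rewrite -(eq_all_r (Tm x Xx)).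
case=> x [Xx aF] <-; split; first by exists x.
by rewrite (eq_all_r (Tm x Xx)).
Qed.

Lemma approx_refl A : finitary A -> approxU U A A.
Proof. by move=> fA; apply/(approx_cnt HU fA fA); apply: (U_mono HU (U_T HU)). Qed.

Lemma equiv_W : equiv_on_W (approxU U).
Proof.
split; first exact: approx_refl. split.
  move=> A B fA fB /(approx_cnt HU fA fB) H; apply/(approx_cnt HU fB fA).
  by apply: (U_mono HU H).
move=> A B C fA fB fC /(approx_cnt HU fA fB) H1 /(approx_cnt HU fB fC) H2.
apply/(approx_cnt HU fA fC); apply: (U_mono HU (U_and HU H1 H2)) => F [-> ->].
by [].
Qed.

Lemma XF_setD A B F : finitary A -> finitary B ->
  XF (setD A B) F = XF A F `\` XF B F.
Proof.
move=> fA fB; have fD : finitary (setD A B) by apply: (finitary_sub _ fA) => x [].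
apply/fsetP => x; apply/idP/idP.
  move/(XFP _ fD) => [[Ax nBx] aF]; rewrite in_fsetD; apply/andP; split.
    by apply/negP => /(XFP _ fB) [].
  by apply/(XFP _ fA).
rewrite in_fsetD => /andP [nB /(XFP _ fA) [Ax aF]]; apply/(XFP _ fD); split => //.
by split => // Bx; move/negP: nB; apply; apply/(XFP _ fB).
Qed.

Lemma AP_holds : AP (approxU U).
Proof.
move=> A B fA fB.
have fD1 : finitary (setD A B) by apply: (finitary_sub _ fA) => x [].
have fD2 : finitary (setD B A) by apply: (finitary_sub _ fB) => x [].
rewrite (approx_cnt HU fA fB) (approx_cnt HU fD1 fD2).
have key : forall F, cnt A F = cnt B F <-> cnt (setD A B) F = cnt (setD B A) F.
  move=> F; rewrite /cnt !XF_setD //.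
  have e1 := cardfsID (XF B F) (XF A F); have e2 := cardfsID (XF A F) (XF B F).
  rewrite fsetIC in e2; rewrite -e1 -e2; split => [|->//]; exact: addnI.
by split => H; apply: (U_mono HU H) => F /key.
Qed.

Lemma TP_holds : TP (approxU U).
Proof.
move=> A T fA Tinj Tp; apply: approx_image => // x Ax; exact: perm_mem (Tp x Ax).
Qed.

Lemma natural_holds : natural (approxU U).
Proof. by move=> X T fX Tinj Tm; apply: approx_image. Qed.

Lemma UP_holds : UP (approxU U).
Proof.
move=> A n fA; apply: (U_mono HU (Hfine n)) => F nF; exists (cnt A F).
split; last exact: hc_cnt.
apply: (hc_image (f := fun a => a ++ [:: n]) (hc_cnt F fA)).
  by move=> x y _ _; rewrite !cats1; apply: rcons_injl.
move=> z; split.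
  case=> [[a [b [Aa -> ->]]]]; rewrite all_cat => /andP[aF _]; by exists a.
case=> a [Aa aF] <-; split; first by exists a, [:: n].
by rewrite all_cat aF /= nF.
Qed.

Lemma PP_holds : PP (approxU U).
Proof.
move=> A B A' B' _ _ _ _ mAB mAB' H1 H2.
apply: (U_mono HU (U_and HU H1 H2)) => F [[n [h1 h2]] [m [h3 h4]]].
by exists (n * m); split; apply: hc_prod.
Qed.

End Part1.

Section ZPsec.
Variable U : fsfamily.
Hypothesis HU : is_ultrafilter U.
Hypothesis Hfine : is_fine U.
Hypothesis Hramsey : is_ramsey U.

Lemma chain_sub (P Q : fsets -> Prop) : (forall F, Q F -> P F) -> chain P -> chain Q.
Proof. by move=> QP cP F G /QP PF /QP PG; apply: cP. Qed.

Lemma mono_ex (P : fsets -> Prop) (g : fsets -> nat) : U P -> chain P ->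
  exists Q, [/\ U Q, (forall F, Q F -> P F) &
    forall F G, Q F -> Q G -> (#|` F| <= #|` G|)%N -> (g F <= g G)%N].
Proof.
move=> UP cP.
pose c (F G : fsets) := if (#|` F| < #|` G|)%N then (g F <= g G)%N
  else if (#|` G| < #|` F|)%N then (g G <= g F)%N else true.
have csym : forall F G, c F G = c G F.
  by move=> F G; rewrite /c; case: (ltngtP #|` F| #|` G|).
have [H UH [b Hb]] := Hramsey csym.
pose Q := fun F => P F /\ H F.
have UQ : U Q by apply: U_and.
have cQ : chain Q by apply: (chain_sub (P := P)) => // F [].
case: b Hb => Hb.
  exists Q; split => // [F [] //|F G QF QG le].
  case: (F =P G) => [->//|/eqP ne].
  have lt : (#|` F| < #|` G|)%N.
    rewrite ltn_neqAle le andbT; apply/negP => /eqP e; move/eqP: ne; apply.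
    exact: (chain_eq cQ QF QG e).
  by have := Hb F G QF.2 QG.2 ne; rewrite /c lt.
exfalso.
pose D := Den HU Hfine UQ.
have dec : forall j, (g (D j.+1) < g (D j))%N.
  move=> j; have ne : D j != D j.+1.
    by apply/eqP => /(@Den_inj U HU Hfine Q UQ) e; lia.
  have := Hb (D j) (D j.+1) (Den_P HU Hfine UQ j).2 (Den_P HU Hfine UQ j.+1).2 ne.
  by rewrite /c Den_lt => /negbT; rewrite -ltnNge.
have : forall j, (g (D j) + j <= g (D 0))%N.
  elim=> [|j IH]; first by rewrite addn0.
  by rewrite addnS; apply: leq_trans IH; rewrite ltn_add2r dec.
move/(_ (g (D 0)).+1); rewrite addnS ltnNge => /negP; apply; exact: leq_addl.
Qed.

Section Construct.
Variables A B : pset.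
Hypothesis fA : finitary A.
Hypothesis fB : finitary B.
Variable Q : fsets -> Prop.
Hypothesis UQ : U Q.
Hypothesis cQ : chain Q.
Hypothesis QAB : forall F, Q F -> (cnt B F < cnt A F)%N.
Hypothesis Qmono : forall F G, Q F -> Q G -> (#|` F| <= #|` G|)%N ->
  (cnt A F - cnt B F <= cnt A G - cnt B G)%N.

Let D := Den HU Hfine UQ.
Let XA j := XF A (D j).
Let gg j := (cnt A (D j) - cnt B (D j))%N.

Lemma XA_nest i j : (i <= j)%N -> XA i `<=` XA j.
Proof. by move=> ij; apply: XF_mono => //; apply: (Den_sub HU Hfine UQ cQ ij). Qed.

Lemma gg_mono i j : (i <= j)%N -> (gg i <= gg j)%N.
Proof.
move=> ij; apply: Qmono; try exact: Den_P.
exact: (Den_mono HU Hfine UQ ij).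
Qed.

Let kk j := (gg j - (if j is j'.+1 then gg j' else 0))%N.
Let RS j := [fset x in take (kk j) (enum_fset (blk XA j))].

Lemma cntB_mono i j : (i <= j)%N -> (cnt B (D i) <= cnt B (D j))%N.
Proof.
move=> ij; apply: fsubset_leq_card; apply: XF_mono => //.
exact: (Den_sub HU Hfine UQ cQ ij).
Qed.

Lemma kk_le j : (kk j <= #|` blk XA j|)%N.
Proof.
rewrite (card_blk XA_nest) /kk /gg.
case: j => [|j].
  by rewrite /prevS cardfs0 !subn0; apply: leq_subr.
have h1 := QAB (Den_P HU Hfine UQ j); have h2 := QAB (Den_P HU Hfine UQ j.+1).
have h3 := cntB_mono (leqnSn j); rewrite /prevS /XA; rewrite /cnt in h1 h2 h3 *.
lia.
Qed.

Lemma card_RS j : #|` RS j| = kk j.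
Proof.
rewrite /RS card_fseq undup_id; last by apply: take_uniq; apply: fset_uniq.
by rewrite size_takel //; apply: kk_le.
Qed.

Lemma RS_blk j : RS j `<=` blk XA j.
Proof. by apply/fsubsetP => x; rewrite /RS in_fset => /mem_take. Qed.

Fixpoint UR j := if j is j'.+1 then UR j' `|` RS j else RS 0.

Lemma mem_UR x j : x \in UR j <-> exists2 i, (i <= j)%N & x \in RS i.
Proof.
elim: j => [|j IH] /=.
  by split => [xr|[i]]; [exists 0|rewrite leqn0 => /eqP ->].
rewrite in_fsetU; split.
  case/orP => [/IH [i ij xi]|xr]; [exists i => //; exact: leqW | by exists j.+1].
case=> i; rewrite leq_eqVlt => /orP [/eqP -> ->|ij xi]; first by rewrite orbT.
by apply/orP; left; apply/IH; exists i.
Qed.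

Lemma UR_sub j : UR j `<=` XA j.
Proof.
apply/fsubsetP => x /mem_UR [i ij /(fsubsetP (RS_blk i))/(fsubsetP (blk_sub XA i))].
exact: (fsubsetP (XA_nest ij)).
Qed.

Lemma card_UR j : #|` UR j| = gg j.
Proof.
elim: j => [|j IH] /=; first by rewrite card_RS /kk subn0.
have I0 : UR j `&` RS j.+1 = fset0.
  apply/fsetP => x; rewrite in_fsetI in_fset0; apply/negP => /andP[xu xr].
  have := fsubsetP (RS_blk _) x xr; rewrite /blk /prevS in_fsetD.
  by rewrite (fsubsetP (UR_sub j) x xu).
have := cardfsUI (UR j) (RS j.+1); rewrite I0 cardfs0 addn0 IH card_RS => ->.
by rewrite /kk subnKC // gg_mono.
Qed.

Definition Bp : pset := fun x => A x /\ forall i, x \notin RS i.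

Lemma fBp : finitary Bp.
Proof. by apply: (finitary_sub _ fA) => x []. Qed.

Lemma XF_Bp j : XF Bp (D j) = XA j `\` UR j.
Proof.
apply/fsetP => x; apply/idP/idP.
  move/(XFP _ fBp) => [[Ax nR] aF]; rewrite in_fsetD; apply/andP; split.
    by apply/negP => /mem_UR [i _]; apply/negP.
  by apply/(XFP _ fA).
rewrite in_fsetD => /andP[nU xA]; have [Ax aF] := proj2 (XFP _ fA x) xA.
apply/(XFP _ fBp); split => //; split => // i; apply/negP => xi.
case: (leqP i j) => [ij|ji].
  by move/negP: nU; apply; apply/mem_UR; exists i.
have := blk_mem_le XA_nest (fsubsetP (RS_blk i) x xi) xA.
by rewrite leqNgt ji.
Qed.

Lemma succ_construct : succ_rel (approxU U) A B.
Proof.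
exists A, Bp; split => //; first exact: fBp.
- split; first by move=> x [].
  have : (0 < #|` RS 0|)%N.
    by rewrite card_RS /kk subn0 /gg subn_gt0; apply: QAB; apply: Den_P.
  rewrite cardfs_gt0 => /fset0Pn [x xr]; exists x; split.
    have := fsubsetP (blk_sub XA 0) x (fsubsetP (RS_blk 0) x xr).
    by move/(XFP _ fA) => [].
  by case=> _ /(_ 0); rewrite xr.
- exact: (approx_refl HU).
- apply/(approx_cnt HU fB fBp); apply: (U_mono HU UQ) => F QF.
  have [j ->] := Den_all HU Hfine UQ cQ QF.
  rewrite /cnt -/(D j) XF_Bp cardfsDS ?UR_sub // card_UR /gg /XA.
  have := QAB (Den_P HU Hfine UQ j); rewrite /cnt -/(D j); lia.
Qed.

End Construct.
Lemma succ_cnt A B : finitary A -> finitary B -> succ_rel (approxU U) A B ->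
  U (fun F => cnt B F < cnt A F)%N.
Proof.
move=> fA fB [A' [B' [fA' fB' [subB' [x [A'x nB'x]]] EA EB]]].
move/(approx_cnt HU fA fA'): EA => EA; move/(approx_cnt HU fB fB'): EB => EB.
apply: (U_mono HU (U_and HU (U_and HU EA EB) (U_all HU Hfine x))) => F [[-> ->] aF].
apply: fproper_ltn_card; rewrite fproperE; apply/andP; split.
  apply/fsubsetP => y /(XFP _ fB') [By yF]; apply/(XFP _ fA'); split => //.
  exact: subB'.
apply/negP => /fsubsetP sub.
have : x \in XF A' F by apply/(XFP _ fA').
by move/sub/(XFP _ fB') => [].
Qed.

Lemma succ_from A B : finitary A -> finitary B -> U (fun F => cnt B F < cnt A F)%N ->
  succ_rel (approxU U) A B.
Proof.
move=> fA fB H; have [Ach UAch cAch] := chain_ex HU Hfine Hramsey.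
pose P := fun F => Ach F /\ (cnt B F < cnt A F)%N.
have UP : U P by apply: U_and.
have cP : chain P by apply: (chain_sub (P := Ach)) => // F [].
have [Q [UQ QP Qm]] := mono_ex (fun F => cnt A F - cnt B F)%N UP cP.
apply: (@succ_construct A B fA fB Q UQ) => //.
  by apply: (chain_sub (P := P)).
by move=> F /QP [].
Qed.

Lemma ZP_holds : ZP (approxU U).
Proof.
move=> A B fA fB.
have nE1 : U (fun F => cnt B F < cnt A F)%N -> ~ approxU U A B.
  move=> H /(approx_cnt HU fA fB) E; apply: (U_not HU H); apply: (U_mono HU E).
  by move=> F ->; rewrite ltnn.
have nE2 : U (fun F => cnt A F < cnt B F)%N -> ~ approxU U A B.
  move=> H /(approx_cnt HU fA fB) E; apply: (U_not HU H); apply: (U_mono HU E).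
  by move=> F ->; rewrite ltnn.
have nS : U (fun F => cnt A F < cnt B F)%N -> ~ succ_rel (approxU U) A B.
  move=> H /(succ_cnt fA fB) H2; apply: (U_not HU H); apply: (U_mono HU H2).
  by move=> F lt lt2; move: (ltn_trans lt lt2); rewrite ltnn.
have nS' : U (fun F => cnt B F < cnt A F)%N -> ~ succ_rel (approxU U) B A.
  move=> H /(succ_cnt fB fA) H2; apply: (U_not HU H); apply: (U_mono HU H2).
  by move=> F lt lt2; move: (ltn_trans lt lt2); rewrite ltnn.
case: (U_em HU (fun F => cnt A F = cnt B F)) => [Heq|Hne].
  have E : approxU U A B by apply/(approx_cnt HU fA fB).
  constructor 1; split => //; split.
    move/(succ_cnt fA fB) => H; apply: (U_not HU H); apply: (U_mono HU Heq).
    by move=> F ->; rewrite ltnn.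
  move/(succ_cnt fB fA) => H; apply: (U_not HU H); apply: (U_mono HU Heq).
  by move=> F ->; rewrite ltnn.
case: (U_em HU (fun F => cnt B F < cnt A F)%N) => [Hlt|Hnlt].
  by constructor 2; split; [exact: nE1|split; [exact: succ_from|exact: nS']].
have Hlt : U (fun F => cnt A F < cnt B F)%N.
  apply: (U_mono HU (U_and HU Hne Hnlt)) => F [ne nlt].
  rewrite ltn_neqAle leqNgt; apply/andP; split; [exact/eqP|exact/negP].
by constructor 3; split; [exact: nE2|split; [exact: nS|exact: succ_from]].
Qed.

End ZPsec.

Section Cong.
Variable U : fsfamily.
Hypothesis HU : is_ultrafilter U.
Hypothesis Hfine : is_fine U.
Hypothesis Hramsey : is_ramsey U.

Lemma cong_approx X Y tau : finitary X -> Ucongruence U tau X Y -> approxU U X Y.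
Proof.
move=> fX [XY tinj UG]; apply: (U_mono HU UG) => F HF; exists (cnt X F).
split; first exact: hc_cnt.
apply: (hc_image (f := tau) (hc_cnt F fX)) => // x y [Xx _] [Xy _]; exact: tinj.
Qed.

Section Build.
Variables X Y : pset.
Hypothesis fX : finitary X.
Hypothesis fY : finitary Y.
Variable P : fsets -> Prop.
Hypothesis UP : U P.
Hypothesis cP : chain P.
Hypothesis PXY : forall F, P F -> cnt X F = cnt Y F.

Let D := Den HU Hfine UP.
Let XX j := XF X (D j).
Let YY j := XF Y (D j).

Lemma XX_nest i j : (i <= j)%N -> XX i `<=` XX j.
Proof. by move=> ij; apply: XF_mono => //; apply: (Den_sub HU Hfine UP cP ij). Qed.
Lemma YY_nest i j : (i <= j)%N -> YY i `<=` YY j.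
Proof. by move=> ij; apply: XF_mono => //; apply: (Den_sub HU Hfine UP cP ij). Qed.

Lemma card_blkXY j : #|` blk XX j| = #|` blk YY j|.
Proof.
rewrite (card_blk XX_nest) (card_blk YY_nest).
have e : forall i, #|` XX i| = #|` YY i| by move=> i; apply: PXY; apply: Den_P.
by case: j => [|j] //=; rewrite !e.
Qed.

Definition tau x := let s := stage XX x in
  nth [::] (enum_fset (blk YY s)) (index x (enum_fset (blk XX s))).

Lemma X_XX x : X x -> exists j, x \in XX j.
Proof.
move=> Xx; have [j aj] := Den_cover HU Hfine UP cP x.
by exists j; apply/(XFP _ fX).
Qed.

Lemma tau_blk x j : x \in blk XX j -> tau x \in blk YY j /\
   index x (enum_fset (blk XX j)) = index (tau x) (enum_fset (blk YY j)).
Proof.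
move=> xb; rewrite /tau (stage_blk XX_nest xb).
have lt : (index x (enum_fset (blk XX j)) < size (enum_fset (blk YY j)))%N.
  by rewrite -/(#|` blk YY j|) -card_blkXY index_mem.
split; first exact: mem_nth.
by rewrite (index_uniq _ lt (fset_uniq _)).
Qed.

Lemma tau_in x : X x -> exists j, x \in blk XX j /\ tau x \in blk YY j.
Proof.
move=> /X_XX [j /stageP [xb _]]; exists (stage XX x); split => //.
by case: (tau_blk xb).
Qed.

Lemma tau_XY x : X x -> Y (tau x).
Proof.
move=> /tau_in [j [_ tb]].
by have := fsubsetP (blk_sub YY j) _ tb; move/(XFP _ fY) => [].
Qed.

Lemma tau_inj : injective_on tau X.
Proof.
move=> x y Xx Xy e.
have [i [xi ti]] := tau_in Xx; have [j [yj tj]] := tau_in Xy.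
rewrite e in ti; have ij := blk_uniq YY_nest ti tj; subst j.
have [_ ex] := tau_blk xi; have [_ ey] := tau_blk yj.
rewrite e -ey in ex.
by rewrite -(nth_index [::] xi) -(nth_index [::] yj) ex.
Qed.

Lemma tau_cong : Ucongruence U tau X Y.
Proof.
split; [exact: tau_XY | exact: tau_inj |].
apply: (U_mono HU UP) => F PF; have [j ->] := Den_all HU Hfine UP cP PF.
rewrite -/(D j) => y; split.
  move/(XFP _ fY); rewrite -/(YY j) => /stageP [yb sj].
  set s := stage YY y in yb sj.
  have lt : (index y (enum_fset (blk YY s)) < size (enum_fset (blk XX s)))%N.
    by rewrite -/(#|` blk XX s|) card_blkXY index_mem.
  set x := nth [::] (enum_fset (blk XX s)) (index y (enum_fset (blk YY s))).
  have xb : x \in blk XX s by apply: mem_nth.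
  exists x.
    apply/(XFP _ fX); apply: (fsubsetP (XX_nest sj)).
    exact: (fsubsetP (blk_sub XX s)).
  have [tb ei] := tau_blk xb.
  rewrite /x index_uniq // in ei.
  by rewrite -(nth_index [::] yb) -(nth_index [::] tb) ei.
case=> x /(XFP _ fX); rewrite -/(XX j) => /stageP [xb sj] <-.
have [tb _] := tau_blk xb.
apply/(XFP _ fY); apply: (fsubsetP (YY_nest sj)).
exact: (fsubsetP (blk_sub YY _)).
Qed.

End Build.

Lemma cong_iff X Y : finitary X -> finitary Y ->
  (approxU U X Y <-> exists tau, Ucongruence U tau X Y).
Proof.
move=> fX fY; split; last by case=> t; apply: cong_approx.
move/(approx_cnt HU fX fY) => H; have [Ach UAch cAch] := chain_ex HU Hfine Hramsey.
pose P := fun F => Ach F /\ cnt X F = cnt Y F.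
have UP : U P by apply: U_and.
have cP : chain P by apply: (chain_sub (P := Ach)) => // F [].
exists (tau X Y UP); apply: (tau_cong fX fY UP cP).
by move=> F [].
Qed.

End Cong.

Lemma evalF_ext S (P P' : pred nat) v : P =1 P' -> evalF S P v -> evalF S P' v.
Proof.
move=> e [L [uL H1 H2 ->]]; exists L; split => //.
  by move=> s /H1; rewrite (eq_all e).
by move=> s; rewrite -(eq_all e); apply: H2.
Qed.

Section Part24.
Variable U : fsfamily.
Hypothesis HU : is_ultrafilter U.
Hypothesis Hfine : is_fine U.
Variable Ach : fsets -> Prop.
Hypothesis UAch : U Ach.
Hypothesis cAch : chain Ach.

Lemma part2 : exists Phi : (nat -> nat) -> (fsets -> nat),
      [/\ forall f g, sigmaU U (fun n => f n = g n) <-> U (fun F => Phi f F = Phi g F),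
          forall f g, sigmaU U (fun n => f n <= g n)%N <->
                      U (fun F => Phi f F <= Phi g F)%N,
          forall f g, U (fun F => Phi (fun n => f n + g n)%N F = Phi f F + Phi g F)%N,
          forall f g, U (fun F => Phi (fun n => f n * g n)%N F = Phi f F * Phi g F)%N
        & forall h : fsets -> nat, exists f, U (fun F => Phi f F = h F)].
Proof.
exists (fun f F => f #|` F|); split => //.
- by move=> f g; apply: (U_mono HU (U_T HU)).
- by move=> f g; apply: (U_mono HU (U_T HU)).
move=> h.
exists (fun n => match pselect (exists F, Ach F /\ #|` F| = n) with
  | left H => h (proj1_sig (cid H)) | right _ => 0%N end).
apply: (U_mono HU UAch) => F AF; case: pselect => [H|[]]; last by exists F.
case: (cid H) => G [AG eG] /=; congr h; exact: (chain_eq cAch AG AF eG).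
Qed.

Let D := Den HU Hfine UAch.

Fixpoint Ls j : seq nat :=
  if j is j'.+1 then Ls j' ++ enum_fset (D j `\` D j') else enum_fset (D 0).

Lemma Ls_mem j : Ls j =i D j.
Proof.
elim: j => [//|j IH] x; change (Ls j.+1) with (Ls j ++ enum_fset (D j.+1 `\` D j)); rewrite mem_cat IH -/(D j.+1) in_fsetD.
have sub := fsubsetP (Den_sub HU Hfine UAch cAch (leqnSn j)) x.
by case: (x \in D j) sub => //= ->.
Qed.

Lemma Ls_uniq j : uniq (Ls j).
Proof.
elim: j => [|j IH]; first exact: fset_uniq.
change (Ls j.+1) with (Ls j ++ enum_fset (D j.+1 `\` D j)).
rewrite cat_uniq IH fset_uniq andbT /=; apply/hasPn => x.
rewrite -/(D j.+1) in_fsetD Ls_mem.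
by case/andP.
Qed.

Lemma Ls_size j : size (Ls j) = #|` D j|.
Proof.
elim: j => [//|j IH]; change (Ls j.+1) with (Ls j ++ enum_fset (D j.+1 `\` D j)); rewrite size_cat IH -/(D j.+1) cardfsDS.
  have h : (#|` D j| <= #|` D j.+1|)%N := Den_mono HU Hfine UAch (leqnSn j). lia.
exact: (Den_sub HU Hfine UAch cAch (leqnSn j)).
Qed.

Lemma Ls_prefix j k : (j <= k)%N -> exists t, Ls k = Ls j ++ t.
Proof.
move=> /subnK <-; elim: (k - j)%N => [|i [t IH]]; first by exists [::]; rewrite cats0.
by rewrite addSn /= IH -catA; eexists.
Qed.

Definition pi n := nth 0%N (Ls n.+1) n.

Lemma Ls_big n : (n < size (Ls n.+1))%N.
Proof. by rewrite Ls_size; apply: Den_ge. Qed.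

Lemma pi_nth j n : (n < size (Ls j))%N -> pi n = nth 0%N (Ls j) n.
Proof.
move=> lt; have [t1 e1] := Ls_prefix (leq_maxl j n.+1).
have [t2 e2] := Ls_prefix (leq_maxr j n.+1).
rewrite /pi.
have : nth 0%N (Ls (maxn j n.+1)) n = nth 0%N (Ls j) n by rewrite e1 nth_cat lt.
have : nth 0%N (Ls (maxn j n.+1)) n = nth 0%N (Ls n.+1) n by rewrite e2 nth_cat Ls_big.
by move=> <- <-.
Qed.

Lemma pi_inj : injective pi.
Proof.
move=> a b e; pose j := (maxn a b).+1.
have ha : (a < size (Ls j))%N.
  by rewrite Ls_size; apply: leq_trans (Den_ge _ _ _ _); rewrite ltnS leq_maxl.
have hb : (b < size (Ls j))%N.
  by rewrite Ls_size; apply: leq_trans (Den_ge _ _ _ _); rewrite ltnS leq_maxr.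
move: e; rewrite (pi_nth ha) (pi_nth hb) => /eqP.
by rewrite nth_uniq ?Ls_uniq // => /eqP.
Qed.

Lemma pi_surj i : exists n, pi n == i.
Proof.
have [j aj] := Den_cover HU Hfine UAch cAch [:: i].
have ij : i \in Ls j by rewrite Ls_mem; move: aj => /= /andP[].
exists (index i (Ls j)); rewrite (pi_nth (n := index i (Ls j)) (j := j)).
  by rewrite nth_index.
by rewrite index_mem.
Qed.

Lemma pi_bij : bijective pi.
Proof.
exists (fun i => xchoose (pi_surj i)).
  by move=> n; apply: pi_inj; apply/eqP; exact: (xchooseP (pi_surj (pi n))).
by move=> i; apply/eqP; exact: (xchooseP (pi_surj i)).
Qed.

Lemma part4 : forall S : series, inR S -> U (fun F => evalF S (fun i => i \in F) 0%R) ->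
       forall k, exists m,
         (forall i, (i <= k)%N -> exists2 j, (j <= m)%N & pi j = i) /\
         evalF S (fun i => i \in map pi (iota 0 m.+1)) 0%R.
Proof.
move=> S _ HS k.
have [F [[AF HF] aF]] := U_ne HU (U_and HU (U_and HU UAch HS) (U_all HU Hfine (iota 0 k.+1))).
have [j eF] := Den_all HU Hfine UAch cAch AF.
have i0 : (0 \in F) by move: aF => /= /andP[].
have szpos : (0 < size (Ls j))%N.
  by rewrite Ls_size /D -eF cardfs_gt0; apply/fset0Pn; exists 0%N.
exists (size (Ls j)).-1; rewrite prednK //; split.
  move=> i ik; have iF : i \in F.
    by move/allP: aF; apply; rewrite mem_iota.
  have iL : i \in Ls j by rewrite Ls_mem /D -eF.
  exists (index i (Ls j)); first by rewrite -ltnS prednK // index_mem.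
  by rewrite (pi_nth (j := j)) ?nth_index // index_mem.
have -> : map pi (iota 0 (size (Ls j))) = Ls j.
  apply: (eq_trans _ (mkseq_nth 0%N (Ls j))); rewrite /mkseq; apply/eq_in_map => n.
  by rewrite mem_iota add0n => /andP[_ lt]; apply: pi_nth.
apply: (evalF_ext _ HF) => i /=; by rewrite Ls_mem /D -eF.
Qed.

End Part24.

Unset Implicit Arguments.
Theorem corollary3p2 (U : fsfamily) :
  is_ultrafilter U -> is_fine U -> is_ramsey U ->
  [/\
   (* approxU is a natural equinumerosity *)
   equinumerosity (approxU U) /\ natural (approxU U),
   (* N^(N^<w)/U is isomorphic (as ordered semiring) to N^N/sigmaU *)
   (exists Phi : (nat -> nat) -> (fsets -> nat),
      [/\ forall f g, sigmaU U (fun n => f n = g n) <-> U (fun F => Phi f F = Phi g F),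
          forall f g, sigmaU U (fun n => f n <= g n)%N <->
                      U (fun F => Phi f F <= Phi g F)%N,
          forall f g, U (fun F => Phi (fun n => f n + g n)%N F = Phi f F + Phi g F)%N,
          forall f g, U (fun F => Phi (fun n => f n * g n)%N F = Phi f F * Phi g F)%N
        & forall h : fsets -> nat, exists f, U (fun F => Phi f F = h F)]),
   (* characterization by U-congruences *)
   (forall X Y, finitary X -> finitary Y ->
      (approxU U X Y <-> exists tau, Ucongruence U tau X Y))
 & (* asymptotic after a reordering of N *)
   exists pi : nat -> nat, bijective pi /\
     forall S : series, inR S -> U (fun F => evalF S (fun i => i \in F) 0%R) ->
       forall k, exists m,
         (forall i, (i <= k)%N -> exists2 j, (j <= m)%N & pi j = i) /\
         evalF S (fun i => i \in map pi (iota 0 m.+1)) 0%R].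
Proof.
move=> HU Hfine Hram.
have [Ach UAch cAch] := chain_ex HU Hfine Hram.
split.
- split; last exact: natural_holds.
  split; [exact: equiv_W | exact: AP_holds | exact: ZP_holds | exact: TP_holds |].
  split; [exact: UP_holds | exact: PP_holds].
- exact: (part2 HU UAch cAch).
- by move=> X Y; apply: cong_iff.
- exists (pi HU Hfine UAch); split; first exact: pi_bij.
  exact: part4.
Qed.
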